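(* Let $\mathbf{L}=\langle L,\leq,0,1\rangle$ be a totally ordered complete lattice, let $f\colon L\to L$ be an order embedding, and let $\mathcal{D}_1,\mathcal{D}_2,\mathcal{D}_3$ be ranked data tables for which both sides of the following equalities are defined. Then (1) $(\mathcal{D}_1\div^{\mathcal{D}_3}\mathcal{D}_2)\circ f=(\mathcal{D}_1\circ f)\div^{\mathcal{D}_3\circ f}(\mathcal{D}_2\circ f)$; (2) $(\mathcal{D}_1\rightarrow^{\mathcal{D}_3}\mathcal{D}_2)\circ f=(\mathcal{D}_1\circ f)\rightarrow^{\mathcal{D}_3\circ f}(\mathcal{D}_2\circ f)$; (3) if $f(0)=0$, then $(\mathcal{D}_1-\mathcal{D}_2)\circ f=(\mathcal{D}_1\circ f)-(\mathcal{D}_2\circ f)$; (4) if $f(1)=1$, then $f(\mathrm{S}(\mathcal{D}_1,\mathcal{D}_2))=\mathrm{S}(\mathcal{D}_1\circ f,\mathcal{D}_2\circ f)$.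
   Context: A relation scheme is a finite set of attributes, each with a (at most countable) set of admissible values; $\mathrm{Tupl}(R)$ is the set of tuples on $R$ (maps assigning to each attribute of $R$ an admissible value). For disjoint $R,S$ and $r\in\mathrm{Tupl}(R)$, $s\in\mathrm{Tupl}(S)$, $rs$ is the tuple on $R\cup S$ extending both. A ranked data table (RDT) on $R$ is a map $\mathcal{D}\colon\mathrm{Tupl}(R)\to L$ with $\{r;\ \mathcal{D}(r)>0\}$ finite. $\mathcal{D}\circ f$ denotes $r\mapsto f(\mathcal{D}(r))$, and operations are applied to such maps by the same formulas. On $L$ define $a\rightarrow b=1$ if $a\leq b$ and $a\rightarrow b=b$ otherwise; $a\ominus b=0$ if $a\leq b$ and $a\ominus b=a$ otherwise. Operations: for $\mathcal{D}_1$ on $R\cup S$ with $R\cap S=\emptyset$, $\mathcal{D}_2$ on $S$ and $\mathcal{D}_3$ on $R$, the division is the map on $\mathrm{Tupl}(R)$ given by $(\mathcal{D}_1\div^{\mathcal{D}_3}\mathcal{D}_2)(r)=\inf\big(\{\mathcal{D}_2(s)\rightarrow\mathcal{D}_1(rs);\ s\in\mathrm{Tupl}(S)\}\cup\{\mathcal{D}_3(r)\}\big)$. For $\mathcal{D}_1,\mathcal{D}_2,\mathcal{D}_3$ on the same $R$: $(\mathcal{D}_1\rightarrow^{\mathcal{D}_3}\mathcal{D}_2)(r)=\inf\{\mathcal{D}_3(r),\mathcal{D}_1(r)\rightarrow\mathcal{D}_2(r)\}$. For $\mathcal{D}_1,\mathcal{D}_2$ on the same $R$: $(\mathcal{D}_1-\mathcal{D}_2)(r)=\mathcal{D}_1(r)\ominus\mathcal{D}_2(r)$,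 and the subsethood score is $\mathrm{S}(\mathcal{D}_1,\mathcal{D}_2)=\inf\{\mathcal{D}_1(r)\rightarrow\mathcal{D}_2(r);\ r\in\mathrm{Tupl}(R)\}\in L$. A map $f$ is an order embedding if $a\leq b \iff f(a)\leq f(b)$. *)

(* Defs.v *)
From HB Require Import structures.
From mathcomp Require Import all_boot all_order.
From mathcomp Require Import finmap.
From mathcomp Require Import boolp classical_sets cardinality.
Set Implicit Arguments. Unset Strict Implicit. Unset Printing Implicit Defensive.
Import Order.TTheory.
Local Open Scope order_scope.
Local Open Scope fset_scope.
Local Open Scope classical_set_scope.

Section RDT.
Context {d : Order.disp_t} {L : tbOrderType d}.

Definition is_glb (X : set L) (a : L) :=
  (forall x, X x -> a <= x) /\ (forall b, (forall x, X x -> b <= x) -> b <= a).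

Definition complete_lattice := forall X : set L, exists a, is_glb X a.

Definition inf (HL : complete_lattice) (X : set L) : L :=
  proj1_sig (cid (HL X)).

(* the residuum of the Goedel structure and the difference *)
Definition impl (a b : L) : L := if a <= b then \top else b.
Definition ominus (a b : L) : L := if a <= b then \bot else a.

Definition order_embedding (f : L -> L) := forall a b, (a <= b) = (f a <= f b).

(* relation schemes: attributes of type A, admissible values dom a *)
Context {A : choiceType} (dom : A -> countType).

Definition Tupl (R : {fset A}) := forall a : R, dom (fsval a).

Lemma tcat_aux (R S : {fset A}) (a : A) :
  a \in fsetU R S -> (a \in R) = false -> a \in S.
Proof. by rewrite in_fsetU => /orP [->|]. Qed.

(* rs : the tuple on R `|` S extending r and s (R, S disjoint) *)
Definition tcat (R S : {fset A}) (r : Tupl R) (s : Tupl S) : Tupl (fsetU R S) :=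
  fun a =>
    match fsval a \in R as b return (fsval a \in R) = b -> dom (fsval a) with
    | true => fun h => r [` h]
    | false => fun h => s [` tcat_aux (fsvalP a) h]
    end erefl.

(* ranked data tables: maps into L with finite support *)
Definition is_rdt (R : {fset A}) (D : Tupl R -> L) :=
  finite_set [set r | \bot < D r].

Variable HL : complete_lattice.

Definition rdiv (R S : {fset A}) (D1 : Tupl (fsetU R S) -> L) (D2 : Tupl S -> L)
  (D3 : Tupl R -> L) : Tupl R -> L :=
  fun r => inf HL ([set impl (D2 s) (D1 (tcat r s)) | s in [set: Tupl S]]
                   `|` [set D3 r]).

Definition rimpl (R : {fset A}) (D1 D2 D3 : Tupl R -> L) : Tupl R -> L :=
  fun r => inf HL [set D3 r; impl (D1 r) (D2 r)].

Definition rminus (R : {fset A}) (D1 D2 : Tupl R -> L) : Tupl R -> L :=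
  fun r => ominus (D1 r) (D2 r).

Definition subsethood (R : {fset A}) (D1 D2 : Tupl R -> L) : L :=
  inf HL [set impl (D1 r) (D2 r) | r in [set: Tupl R]].

End RDT.

(* Main.v *)
Require Import Defs.
From HB Require Import structures.
From mathcomp Require Import all_boot all_order.
From mathcomp Require Import finmap.
From mathcomp Require Import boolp classical_sets cardinality.
Import Order.TTheory.
Local Open Scope order_scope.
Local Open Scope fset_scope.
Local Open Scope classical_set_scope.

Section H.
Context {d : Order.disp_t} {L : tbOrderType d}.
Variable HL : complete_lattice (L := L).

Lemma seq_min (s : seq L) : exists m, (forall x, x \in s -> m <= x) /\ (m = \top \/ m \in s).
Proof.
elim: s => [|x s [m [Hm Hm2]]]; first by exists \top; split => //; left.
exists (Order.min x m); split.
  move=> y; rewrite in_cons => /orP [/eqP ->|ys]; first by rewrite ge_min lexx.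
  by rewrite ge_min Hm ?orbT.
case: (leP x m) => _; first by right; rewrite mem_head.
by case: Hm2 => [->|h]; [left|right; rewrite in_cons h orbT].
Qed.

Lemma fin_min (X : set L) : finite_set (X `\` [set \top]) ->
  exists m, (forall x, X x -> m <= x) /\ (m = \top \/ X m).
Proof.
move=> /finite_fsetP [B HB].
have [m [Hm Hm2]] := seq_min B.
exists m; split.
  move=> x Xx; have [->|nt] := eqVneq x \top; first exact: lex1.
  apply: Hm; have : [set` B] x by rewrite -HB; split => //= /eqP; rewrite (negbTE nt).
  done.
case: Hm2 => [->|h]; [by left|right].
have : [set` B] m by [].
by rewrite -HB => -[].
Qed.

Lemma inf_eq (X : set L) m : (forall x, X x -> m <= x) -> (m = \top \/ X m) -> inf HL X = m.
Proof.
move=> lb hm; rewrite /inf; case: cid => a [H1 H2] /=.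
apply/le_anti/andP; split; last exact: H2.
case: hm => [->|]; [exact: lex1| exact: H1].
Qed.


Lemma fin_img T (g : T -> L) (P : set T) : finite_set P ->
  (forall t, ~ P t -> g t = \top) ->
  finite_set ([set g t | t in [set: T]] `\` [set \top]).
Proof.
move=> fP hg; apply: (sub_finite_set _ (finite_image g fP)).
move=> y [[t _ <-] nt]; exists t => //.
by apply: contrapT => nP; apply: nt; rewrite /= hg.
Qed.

Variable f : L -> L.
Hypothesis hf : order_embedding f.

Lemma key (X Y : set L) mX mY :
  (forall x, X x -> mX <= x) -> (mX = \top \/ X mX) ->
  (forall y, Y y -> mY <= y) -> (mY = \top \/ Y mY) ->
  (forall y, Y y -> exists x, X x /\ f x <= y) ->
  (forall x, X x -> exists y, Y y /\ y <= f x) ->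
  (mX = \top -> mY <= f \top) -> f mX = mY.
Proof.
move=> lX hX lY hY c1 c2 c3.
apply/le_anti/andP; split.
  case: hY => [->|Ym]; first exact: lex1.
  have [x [Xx fx]] := c1 _ Ym; apply: le_trans fx; rewrite -hf; exact: lX.
case: hX => [Xt|Xm]; first by rewrite Xt; exact: c3.
have [y [Yy fy]] := c2 _ Xm; exact: le_trans (lY _ Yy) fy.
Qed.

Lemma impl_f a b : ~~ (a <= b) -> impl (f a) (f b) = f b /\ impl a b = b.
Proof. by move=> h; rewrite /impl -hf (negbTE h). Qed.

Lemma finU1 (A : set L) c : finite_set (A `\` [set \top]) ->
  finite_set ((A `|` [set c]) `\` [set \top]).
Proof.
move=> h; apply: (sub_finite_set _ (_ : finite_set ((A `\` [set \top]) `|` [set c]))).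
  by move=> x [[Ax|->] nt]; [left|right].
by rewrite finite_setU; split => //; exact: finite_set1.
Qed.

Lemma impl_bot (b : L) : impl \bot b = \top.
Proof. by rewrite /impl le0x. Qed.

Lemma nbot (x : L) : ~ (\bot < x) -> x = \bot.
Proof. by move=> h; case: (eqVneq x \bot) => // nx; exfalso; apply: h; rewrite lt0x nx. Qed.
End H.

Theorem theorem7 (d : Order.disp_t) (L : tbOrderType d) (HL : complete_lattice (L := L))
  (f : L -> L) (hf : order_embedding f) (A : choiceType) (dom : A -> countType) :
  (forall (R S : {fset A}) (D1 : Tupl dom (fsetU R S) -> L) (D2 : Tupl dom S -> L)
     (D3 : Tupl dom R -> L),
     fsetI R S = fset0 ->
     is_rdt D1 -> is_rdt D2 -> is_rdt D3 ->
     is_rdt (f \o D1) -> is_rdt (f \o D2) -> is_rdt (f \o D3) ->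
     f \o rdiv HL D1 D2 D3 = rdiv HL (f \o D1) (f \o D2) (f \o D3))
  /\
  (forall (R : {fset A}) (D1 D2 D3 : Tupl dom R -> L),
     is_rdt D1 -> is_rdt D2 -> is_rdt D3 ->
     is_rdt (f \o D1) -> is_rdt (f \o D2) -> is_rdt (f \o D3) ->
     f \o rimpl HL D1 D2 D3 = rimpl HL (f \o D1) (f \o D2) (f \o D3))
  /\
  (f \bot = \bot ->
   forall (R : {fset A}) (D1 D2 : Tupl dom R -> L),
     is_rdt D1 -> is_rdt D2 -> is_rdt (f \o D1) -> is_rdt (f \o D2) ->
     f \o rminus D1 D2 = rminus (f \o D1) (f \o D2))
  /\
  (f \top = \top ->
   forall (R : {fset A}) (D1 D2 : Tupl dom R -> L),
     is_rdt D1 -> is_rdt D2 -> is_rdt (f \o D1) -> is_rdt (f \o D2) ->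
     f (subsethood HL D1 D2) = subsethood HL (f \o D1) (f \o D2)).
Proof.
split.
  move=> R S D1 D2 D3 _ _ h2 _ _ hf2 _; apply: funext => r /=; rewrite /rdiv.
  set X := (_ `|` _); set Y := (_ `|` _).
  have fX : finite_set (X `\` [set \top]).
    apply: finU1; apply: (@fin_img _ _ _ (fun s => impl (D2 s) (D1 (tcat r s))) _ h2) => s /nbot ->; exact: impl_bot.
  have fY : finite_set (Y `\` [set \top]).
    apply: finU1; apply: (@fin_img _ _ _ (fun s => impl (f (D2 s)) (f (D1 (tcat r s)))) _ hf2) => s /nbot /= ->; exact: impl_bot.
  have [mX [lX hX]] := fin_min _ fX.
  have [mY [lY hY]] := fin_min _ fY.
  rewrite (inf_eq HL _ _ lX hX) (inf_eq HL _ _ lY hY).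
  have XD3 : X (D3 r) by right.
  have YD3 : Y (f (D3 r)) by right.
  apply: (@key _ _ f hf _ _ _ _ lX hX lY hY).
  - move=> y [[s _ <-]|->]; last by exists (D3 r).
    case: (boolP (D2 s <= D1 (tcat r s))) => h.
      exists (D3 r); split => //; by rewrite /= /impl -hf h lex1.
    have [-> e] := @impl_f _ _ f hf _ _ h; exists (impl (D2 s) (D1 (tcat r s))); split.
      by left; exists s.
    by rewrite e.
  - move=> x [[s _ <-]|->]; last by exists (f (D3 r)).
    case: (boolP (D2 s <= D1 (tcat r s))) => h.
      exists (f (D3 r)); split => //; by rewrite /impl h -hf lex1.
    have [e1 ->] := @impl_f _ _ f hf _ _ h; exists (f (D1 (tcat r s))); split => //.
    by left; exists s => //; rewrite /= e1.
  - move=> mt; apply: le_trans (lY _ YD3) _; rewrite -hf lex1 //.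
split.
  move=> R D1 D2 D3 _ _ _ _ _ _; apply: funext => r /=; rewrite /rimpl.
  set X := [set _; _]; set Y := [set _; _].
  have fX : finite_set (X `\` [set \top]).
    by apply: (sub_finite_set _ (finite_set2 (D3 r) (impl (D1 r) (D2 r)))) => x [].
  have fY : finite_set (Y `\` [set \top]).
    by apply: (sub_finite_set _ (finite_set2 (f (D3 r)) (impl (f (D1 r)) (f (D2 r))))) => x [].
  have [mX [lX hX]] := fin_min _ fX.
  have [mY [lY hY]] := fin_min _ fY.
  rewrite (inf_eq HL _ _ lX hX) (inf_eq HL _ _ lY hY).
  have XD3 : X (D3 r) by left.
  have YD3 : Y (f (D3 r)) by left.
  apply: (@key _ _ f hf _ _ _ _ lX hX lY hY).
  - move=> y [->|->]; first by exists (D3 r).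
    case: (boolP (D1 r <= D2 r)) => h.
      exists (D3 r); split => //; by rewrite /= /impl -hf h lex1.
    have [-> e] := @impl_f _ _ f hf _ _ h; exists (impl (D1 r) (D2 r)); split.
      by right.
    by rewrite e.
  - move=> x [->|->]; first by exists (f (D3 r)).
    case: (boolP (D1 r <= D2 r)) => h.
      exists (f (D3 r)); split => //; by rewrite /impl h -hf lex1.
    have [e1 ->] := @impl_f _ _ f hf _ _ h; exists (f (D2 r)); split => //.
    by right; rewrite /= e1.
  - move=> mt; apply: le_trans (lY _ YD3) _; rewrite -hf lex1 //.
split.
  move=> f0 R D1 D2 _ _ _ _; apply: funext => r /=.
  by rewrite /rminus /ominus /= -hf; case: ifP.
move=> f1 R D1 D2 h1 _ hf1 _; rewrite /subsethood.
set X := [set _ | _ in _]; set Y := [set _ | _ in _].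
have fX : finite_set (X `\` [set \top]).
  apply: (@fin_img _ _ _ (fun s => impl (D1 s) (D2 s)) _ h1) => s /nbot ->; exact: impl_bot.
have fY : finite_set (Y `\` [set \top]).
  apply: (@fin_img _ _ _ (fun s => impl (f (D1 s)) (f (D2 s))) _ hf1) => s /nbot /= ->; exact: impl_bot.
have [mX [lX hX]] := fin_min _ fX.
have [mY [lY hY]] := fin_min _ fY.
rewrite (inf_eq HL _ _ lX hX) (inf_eq HL _ _ lY hY).
apply: (@key _ _ f hf _ _ _ _ lX hX lY hY).
- move=> y [s _ <-].
  case: (boolP (D1 s <= D2 s)) => h.
    exists \top; split; last by rewrite f1 /= /impl -hf h.
    by exists s => //; rewrite /impl h.
  have [-> e] := @impl_f _ _ f hf _ _ h; exists (impl (D1 s) (D2 s)); split.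
    by exists s.
  by rewrite e.
- move=> x [s _ <-].
  case: (boolP (D1 s <= D2 s)) => h.
    exists \top; split; last by rewrite /impl h f1.
    by exists s => //; rewrite /= /impl -hf h.
  have [e1 ->] := @impl_f _ _ f hf _ _ h; exists (f (D2 s)); split => //.
  by exists s => //; rewrite /= e1.
- by move=> _; rewrite f1 lex1.
Qed.
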